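(* Let $\Bbbk$ be an algebraically closed field of characteristic $0$, let $P=\Bbbk[x_1,x_2,x_3]$ be a quadratic Poisson algebra, and let $Q=\Bbbk[y_1,y_2,y_3]$ be a Poisson algebra such that: (1) there are distinct $i,j\in\{1,2,3\}$ with $\{y_i,y_j\}=f(y_1,y_2)-r y_3$, where $f\in\Bbbk[y_1,y_2]$ is homogeneous with respect to the grading $\deg y_1=\deg y_2=1$ and $r\in\Bbbk^\times$; (2) for the remaining unordered pairs $\{k,l\}\neq\{i,j\}$ of distinct indices in $\{1,2,3\}$, the bracket $\{y_k,y_l\}$ is a scalar multiple (possibly zero) of a single monomial in $y_1,y_2,y_3$. Then $P$ is not isomorphic to $Q$ as Poisson algebras.
   Context: $P$ has the standard grading and is quadratic: $\{P_1,P_1\}\subseteq P_2$. A Poisson isomorphism is an algebra isomorphism that is also a Lie algebra isomorphism. *)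

(* Defs.v *)
From HB Require Import structures.
From mathcomp Require Import all_boot all_order all_algebra.
From mathcomp Require Import mpoly.
Set Implicit Arguments. Unset Strict Implicit. Unset Printing Implicit Defensive.
Import GRing.Theory.
Local Open Scope ring_scope.

(* A Poisson bracket on the polynomial algebra k[x_1..x_n] = {mpoly k[n]}:
   k-bilinear (linear in the 2nd argument + antisymmetry), antisymmetric,
   biderivation (Leibniz rule in the 2nd argument, hence in both), Jacobi. *)
Definition is_poisson_bracket (k : fieldType) (n : nat)
  (br : {mpoly k[n]} -> {mpoly k[n]} -> {mpoly k[n]}) : Prop :=
  [/\ (forall (a b c : {mpoly k[n]}) (l : k), br a (l *: b + c) = l *: br a b + br a c),
      (forall a b, br a b = - br b a),
      (forall a b c, br a (b * c) = br a b * c + b * br a c)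
    & (forall a b c, br a (br b c) + br b (br c a) + br c (br a b) = 0)].

(* Quadratic Poisson algebra: {P_1, P_1} \subseteq P_2 for the standard grading,
   i.e. each bracket of two generators is homogeneous of total degree 2 (or 0). *)
Definition quadratic_bracket (k : fieldType) (n : nat)
  (br : {mpoly k[n]} -> {mpoly k[n]} -> {mpoly k[n]}) : Prop :=
  forall a b : 'I_n, br 'X_a 'X_b \is 2.-homog.

Definition poisson_iso (k : fieldType) (n : nat)
  (brP brQ : {mpoly k[n]} -> {mpoly k[n]} -> {mpoly k[n]})
  (phi : {mpoly k[n]} -> {mpoly k[n]}) : Prop :=
  [/\ (forall (a b : {mpoly k[n]}) (l : k), phi (l *: a + b) = l *: phi a + phi b),
      (forall a b, phi (a * b) = phi a * phi b),
      phi 1 = 1,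
      bijective phi
    & (forall a b, phi (brP a b) = brQ (phi a) (phi b))].

(* Main.v *)
Require Import Defs.
From HB Require Import structures.
From mathcomp Require Import all_boot all_order all_algebra.
From mathcomp Require Import mpoly.
Import GRing.Theory.
Local Open Scope ring_scope.

Lemma gen_ind (k : fieldType) n (G : {mpoly k[n]} -> Prop) :
  G 0 -> G 1 -> (forall u, G 'X_u) -> (forall a b, G a -> G b -> G (a + b)) ->
  (forall a b, G a -> G b -> G (a * b)) -> (forall c a, G a -> G (c *: a)) ->
  forall p, G p.
Proof.
move=> G0 G1 GX GD GM GZ; elim/mpolyind => // c m p _ _ Gp; apply: GD => //.
apply: GZ; rewrite mpolyXE_id; apply: big_ind => // u _.
by elim: (m u) => [|e IH]; [rewrite expr0 | rewrite exprS; apply: GM].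
Qed.

Lemma mdeg2_split n (m : 'X_{1..n}) : mdeg m = 2%N ->
  exists s t : 'I_n, m = (U_(t) + U_(s))%MM.
Proof.
move=> hm.
have [s hs] : exists s, m s != 0%N.
  apply/existsP; apply: contraT; rewrite negb_exists => /forallP h0.
  have : m = 0%MM by apply/mnmP => i; rewrite mnm0E; apply/eqP; move: (h0 i); rewrite negbK.
  by move=> m0; move: hm; rewrite m0 mdeg0.
have E : m = ((m - U_(s)) + U_(s))%MM.
  apply/mnmP => i; rewrite mnmDE mnmBE mnm1E.
  by case: eqP => [<-|_]; [rewrite addn1 subn1 prednK // lt0n | rewrite subn0 addn0].
have : mdeg (m - U_(s))%MM == 1%N.
  by move: hm; rewrite {1}E mdegD mdeg1 addn1 => [[->]].
case/mdeg1P => t /eqP ht; exists s, t; by rewrite {1}E ht.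
Qed.

(* Variables indexed by 'I_3: 'X_0, 'X_1, 'X_2 stand for x_1,x_2,x_3 (resp. y_1,y_2,y_3). *)
Theorem lemma2p2 (k : closedFieldType) (char0 : [pchar k] =i pred0)
  (brP brQ : {mpoly k[3]} -> {mpoly k[3]} -> {mpoly k[3]})
  (hP : is_poisson_bracket brP) (hPq : quadratic_bracket brP)
  (hQ : is_poisson_bracket brQ)
  (i j : 'I_3) (hij : i != j)
  (f : {mpoly k[3]}) (d : nat) (r : k)
  (hf2 : forall m, m \in msupp f -> m (2 : 'I_3) = 0%N)
  (hfd : f \is d.-homog)
  (hr : r != 0)
  (hQij : brQ 'X_i 'X_j = f - r *: 'X_(2 : 'I_3))
  (hQkl : forall kk l : 'I_3, kk != l ->
          ~~ (((kk == i) && (l == j)) || ((kk == j) && (l == i))) ->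
          exists (c : k) (m : 'X_{1..3}), brQ 'X_kk 'X_l = c *: 'X_[m]) :
  ~ (exists phi, poisson_iso brP brQ phi).
Proof.
move=> [phi [hlin hmul h1 [psi hpk hkp] hbr]].
have phiD a b : phi (a + b) = phi a + phi b by have := hlin a b 1; rewrite !scale1r.
have phi0 : phi 0 = 0.
  by move: (phiD 0 0); rewrite addr0 => /(congr1 (fun x => x - phi 0)); rewrite subrr addrK.
have phiZ c a : phi (c *: a) = c *: phi a by have := hlin a 0 c; rewrite !addr0 phi0 addr0.
have psiM u v : psi (u * v) = psi u * psi v by rewrite -{1}(hkp u) -{1}(hkp v) -hmul hpk.
have psiD u v : psi (u + v) = psi u + psi v by rewrite -{1}(hkp u) -{1}(hkp v) -phiD hpk.
have psiZ c u : psi (c *: u) = c *: psi u by rewrite -{1}(hkp u) -phiZ hpk.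
have psi1 : psi 1 = 1 by rewrite -h1 hpk.
pose z : 'I_3 -> k := fun _ => 0.
pose L q := meval z (psi q).
pose ev0 p := meval z p.
have LM u v : L (u * v) = L u * L v by rewrite /L psiM mevalM.
have LD u v : L (u + v) = L u + L v by rewrite /L psiD mevalD.
have LZ c u : L (c *: u) = c * L u by rewrite /L psiZ mevalZ.
have L1 : L 1 = 1 by rewrite /L psi1 meval1.
have Lphi p : L (phi p) = ev0 p by rewrite /L hpk.
pose D (q : {mpoly k[3]}) : {mpoly k[3]} := mderiv (2 : 'I_3) q.
pose dl p := L (D (phi p)).
have dlM p q : dl (p * q) = dl p * ev0 q + ev0 p * dl q.
  by rewrite /dl /D hmul mderivM LD !LM !Lphi.
have dlD p q : dl (p + q) = dl p + dl q by rewrite /dl /D phiD mderivD LD.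
have dlZ c p : dl (c *: p) = c * dl p by rewrite /dl /D phiZ mderivZ LZ.
pose M2 p := ev0 p = 0 /\ dl p = 0.
have M2_0 : M2 0.
  split; first by rewrite /ev0 meval0.
  by have := dlD 0 0; rewrite addr0 => /(congr1 (fun x => x - dl 0)); rewrite subrr addrK.
have M2D p q : M2 p -> M2 q -> M2 (p + q).
  move=> [h1p h2p] [h1q h2q]; rewrite /ev0 in h1p h1q; split.
    by rewrite /ev0 mevalD h1p h1q addr0.
  by rewrite dlD h2p h2q addr0.
have M2Z c p : M2 p -> M2 (c *: p).
  move=> [h1p h2p]; rewrite /ev0 in h1p; split.
    by rewrite /ev0 mevalZ h1p mulr0.
  by rewrite dlZ h2p mulr0.
have M2Ml g p : M2 p -> M2 (g * p).
  move=> [h1p h2p]; split.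
    by rewrite /ev0 mevalM; rewrite /ev0 in h1p; rewrite h1p mulr0.
  by rewrite dlM h1p h2p !mulr0 addr0.
have M2Mr g p : M2 p -> M2 (p * g).
  move=> [h1p h2p]; split.
    by rewrite /ev0 mevalM; rewrite /ev0 in h1p; rewrite h1p mul0r.
  by rewrite dlM h1p h2p !mul0r addr0.
have ev0X s : ev0 'X_s = 0 by rewrite /ev0 mevalXU.
have M2XX s t : M2 ('X_s * 'X_t).
  split; first by rewrite /ev0 mevalM !mevalXU mulr0.
  by rewrite dlM !ev0X mulr0 mul0r addr0.
have M2h p : p \is 2.-homog -> M2 p.
  move=> /dhomogP hp.
  suff : M2 (\sum_(m <- msupp p) p@_m *: 'X_[m]) by rewrite -mpolyE.
  rewrite big_seq; apply: big_ind => // m /hp /mdeg2_split [s [t ->]].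
  by apply: M2Z; rewrite mpolyXD; apply: M2XX.
case: hP => bl ba bL bJ.
have br0 a : brP a 0 = 0.
  have := bl a 0 0 1; rewrite !scale1r addr0 => /(congr1 (fun x => x - brP a 0)).
  by rewrite subrr addrK.
have br1 a : brP a 1 = 0.
  have := bL a 1 1; rewrite !mulr1 mul1r => /(congr1 (fun x => x - brP a 1)).
  by rewrite subrr addrK.
pose G a := forall b, M2 (brP a b).
have GX u : G 'X_u.
  apply: gen_ind.
  - by rewrite br0.
  - by rewrite br1.
  - by move=> v; apply: M2h; apply: hPq.
  - by move=> a b Ga Gb; have := bl 'X_u a b 1; rewrite !scale1r => ->; apply: M2D.
  - by move=> a b Ga Gb; rewrite bL; apply: M2D; [apply: M2Mr | apply: M2Ml].
  - by move=> c a Ga; have := bl 'X_u a 0 c; rewrite addr0 br0 addr0 => ->; apply: M2Z.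
have Gall : forall a, G a.
  apply: gen_ind.
  - by move=> b; rewrite ba br0 oppr0.
  - by move=> b; rewrite ba br1 oppr0.
  - exact: GX.
  - move=> a a' Ga Ga' b; rewrite ba -{1}[a]scale1r bl !scale1r opprD -!ba.
    by apply: M2D.
  - move=> a a' Ga Ga' b; rewrite ba bL opprD -mulNr -mulrN -!ba.
    by apply: M2D; [apply: M2Mr | apply: M2Ml].
  - move=> c a Ga b; rewrite ba -[c *: a]addr0 bl br0 addr0 -scalerN -ba.
    by apply: M2Z.
have := (Gall (psi 'X_i) (psi 'X_j)).2.
rewrite /dl hbr !hkp hQij /D mderivB mderivZ mderivX mnm1E eqxx.
have -> : (U_(2 : 'I_3) - U_(2 : 'I_3))%MM = 0%MM by apply/mnmP => x; rewrite mnmBE subnn mnm0E.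
rewrite mpolyX0.
have -> : mderiv 2 f = 0.
  rewrite {1}(mpolyE f) raddf_sum big1_seq // => m /andP [_ /hf2 hm].
  suff E : mderiv (2 : 'I_3) (f@_m *: 'X_[m]) = 0 by exact: E.
  by rewrite mderivZ mderivX hm scale0r scaler0.
rewrite /= ?mulr1n scale1r sub0r -scaleN1r !LZ L1 mulr1 mulN1r => /eqP.
by rewrite oppr_eq0 (negbTE hr).
Qed.
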